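(* $\mathsf{LC}$ is sound and complete for finite perfect Kripke models with tree frames: for every modal proposition $A$, $\mathsf{LC}\vdash A$ iff $A$ is forced at every node of every finite perfect Kripke model with tree frame.
   Context: Modal language: propositional variables, $\bot$, $\wedge,\vee,\to$, $\Box$. $\mathsf{iGL}$: intuitionistic propositional logic in the modal language plus $\Box(A\to B)\to(\Box A\to\Box B)$, $\Box A\to\Box\Box A$, $\Box(\Box A\to A)\to\Box A$, closed under modus ponens and necessitation. $\mathsf{LC}:=\mathsf{iGL}+\{A\to\Box A\}$. A Kripke model is $(K,<,\mathcal{R},V)$ with $(K,<)$ a partial order, $\mathcal{R}$ a binary relation with $(\le;\mathcal{R})\subseteq\mathcal{R}$ (composition: $\alpha(R;S)\gamma$ iff $\alpha R\beta S\gamma$ for some $\beta$), $V$ a monotone valuation of variables; forcing is the usual intuitionistic one for $\wedge,\vee,\to,\bot$, and $\alpha\Vdash\Box A$ iff $\beta\Vdash A$ for all $\beta$ with $\alpha\mathcal{R}\beta$. It is perfect if $(\mathcal{R};\le)\subseteq\mathcal{R}$, $\mathcal{R}^{-1}$ is well-founded and $\mathcal{R}\subseteq<$; finite if $K$ is finite; has a tree frame if $(K,\le)$ is a tree. *)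

(* Defs.v *)
From Stdlib Require Import List.

Inductive form : Type :=
| Var : nat -> form
| Bot : form
| And : form -> form -> form
| Or  : form -> form -> form
| Imp : form -> form -> form
| Box : form -> form.

Inductive LC_prf : form -> Prop :=
| ax_K1 A B : LC_prf (Imp A (Imp B A))
| ax_S A B C : LC_prf (Imp (Imp A (Imp B C)) (Imp (Imp A B) (Imp A C)))
| ax_andE1 A B : LC_prf (Imp (And A B) A)
| ax_andE2 A B : LC_prf (Imp (And A B) B)
| ax_andI A B : LC_prf (Imp A (Imp B (And A B)))
| ax_orI1 A B : LC_prf (Imp A (Or A B))
| ax_orI2 A B : LC_prf (Imp B (Or A B))
| ax_orE A B C : LC_prf (Imp (Imp A C) (Imp (Imp B C) (Imp (Or A B) C)))
| ax_efq A : LC_prf (Imp Bot A)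
| ax_boxK A B : LC_prf (Imp (Box (Imp A B)) (Imp (Box A) (Box B)))
| ax_box4 A : LC_prf (Imp (Box A) (Box (Box A)))
| ax_Lob A : LC_prf (Imp (Box (Imp (Box A) A)) (Box A))
| ax_LC A : LC_prf (Imp A (Box A))
| rule_MP A B : LC_prf (Imp A B) -> LC_prf A -> LC_prf B
| rule_Nec A : LC_prf A -> LC_prf (Box A).

Record model : Type := Model {
  world : Type;
  lt : world -> world -> Prop;
  R : world -> world -> Prop;
  V : nat -> world -> Prop;
  lt_irrefl : forall x, ~ lt x x;
  lt_trans : forall x y z, lt x y -> lt y z -> lt x z;
  le_R : forall x y z, (x = y \/ lt x y) -> R y z -> R x z;
  V_mono : forall p x y, (x = y \/ lt x y) -> V p x -> V p y
}.

Definition le (M : model) (x y : world M) : Prop := x = y \/ lt M x y.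

Fixpoint forces (M : model) (x : world M) (A : form) : Prop :=
  match A with
  | Var p => V M p x
  | Bot => False
  | And A B => forces M x A /\ forces M x B
  | Or A B => forces M x A \/ forces M x B
  | Imp A B => forall y, le M x y -> forces M y A -> forces M y B
  | Box A => forall y, R M x y -> forces M y A
  end.

Definition perfect (M : model) : Prop :=
  (forall x y z, R M x y -> le M y z -> R M x z) /\
  well_founded (fun y x : world M => R M x y) /\
  (forall x y, R M x y -> lt M x y).

Definition finite_model (M : model) : Prop :=
  exists l : list (world M), forall x, In x l.

Definition tree_frame (M : model) : Prop :=
  (exists r : world M, forall x, le M r x) /\
  (forall x y z : world M, le M y x -> le M z x -> le M y z \/ le M z y).

(* Main.v *)
Require Import Defs.
From Stdlib Require Import List Arith Lia Wf_nat Classical ClassicalEpsilon ProofIrrelevance.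
Import ListNotations.

Lemma le_refl' M x : le M x x. Proof. left; reflexivity. Qed.
Lemma le_trans' M x y z : le M x y -> le M y z -> le M x z.
Proof. unfold le; intros [->|H1] [->|H2]; auto. right; eapply lt_trans; eauto. Qed.

Lemma mono M A : forall x y, le M x y -> forces M x A -> forces M y A.
Proof.
  induction A; simpl; intros x y Hxy H.
  - eapply V_mono; eauto.
  - exact H.
  - destruct H; split; eauto.
  - destruct H; [left|right]; eauto.
  - intros z Hz; apply H; eapply le_trans'; eauto.
  - intros z Hz; apply H; eapply le_R; eauto.
Qed.

Lemma sound A : LC_prf A -> forall M, perfect M -> forall x, forces M x A.
Proof.
  intros H M [P1 [P2 P3]]. induction H; intro x; simpl.
  - intros y _ a z Hz _. eapply mono; eauto.
  - intros y _ f z Hz g w Hw a.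
    apply (f w (le_trans' _ _ _ _ Hz Hw) a w (le_refl' _ _) (g w Hw a)).
  - intros y _ [a b]; exact a.
  - intros y _ [a b]; exact b.
  - intros y _ a z Hz b; split; [eapply mono; eauto|exact b].
  - intros y _ a; left; exact a.
  - intros y _ a; right; exact a.
  - intros y _ f z Hz g w Hw [a|b].
    + exact (f w (le_trans' _ _ _ _ Hz Hw) a).
    + exact (g w Hw b).
  - intros y _ [].
  - intros y _ f z Hz g w Rzw.
    exact (f w (le_R M y z w Hz Rzw) w (le_refl' _ _) (g w Rzw)).
  - intros y _ f z Ryz w Rzw. apply f. apply (P1 y z w Ryz). right; apply P3; exact Rzw.
  - intros y _ f z Ryz. revert Ryz. pattern z. apply (well_founded_ind P2).
    intros z0 IH Ryz0. apply (f z0 Ryz0 z0 (le_refl' _ _)).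
    intros w Rzw. apply IH; auto. apply (P1 y z0 w Ryz0). right; apply P3; exact Rzw.
  - intros y _ a z Ryz. eapply mono; [right; apply P3; exact Ryz | exact a].
  - exact (IHLC_prf1 x x (le_refl' _ _) (IHLC_prf2 x)).
  - intros y _; apply IHLC_prf.
Qed.

Inductive Der (G : form -> Prop) : form -> Prop :=
| Dhyp A : G A -> Der G A
| Dthm A : LC_prf A -> Der G A
| Dmp A B : Der G (Imp A B) -> Der G A -> Der G B.

Lemma imp_refl A : LC_prf (Imp A A).
Proof.
  eapply rule_MP; [eapply rule_MP; [apply (ax_S A (Imp A A) A)|apply ax_K1]|apply (ax_K1 A A)].
Qed.

Lemma deduction G F B : Der (fun y => G y \/ y = F) B -> Der G (Imp F B).
Proof.
  induction 1.
  - destruct H as [H| ->].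
    + apply Dmp with A; [apply Dthm, ax_K1| apply Dhyp; exact H].
    + apply Dthm, imp_refl.
  - apply Dmp with A; [apply Dthm, ax_K1| apply Dthm; exact H].
  - eapply Dmp; [eapply Dmp; [apply Dthm, (ax_S F A B)|exact IHDer1]|exact IHDer2].
Qed.

Lemma Der_cut G G' A : Der G A -> (forall x, G x -> Der G' x) -> Der G' A.
Proof. induction 1; intros; [auto|apply Dthm; auto|eapply Dmp; eauto]. Qed.

Lemma Der_mono G G' A : Der G A -> (forall x, G x -> G' x) -> Der G' A.
Proof. intros H H'; eapply Der_cut; eauto; intros; apply Dhyp; auto. Qed.

Lemma Der_nec G A : Der G A -> Der (fun x => exists y, G y /\ x = Box y) (Box A).
Proof.
  induction 1.
  - apply Dhyp; eauto.
  - apply Dthm, rule_Nec; auto.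
  - eapply Dmp; [eapply Dmp; [apply Dthm, (ax_boxK A B)|exact IHDer1]|exact IHDer2].
Qed.

Lemma Der_empty A : Der (fun _ => False) A -> LC_prf A.
Proof. induction 1; [contradiction|auto|eapply rule_MP; eauto]. Qed.

Fixpoint sub (A : form) : list form :=
  A :: match A with
       | And B C | Or B C | Imp B C => sub B ++ sub C
       | Box B => sub B
       | _ => []
       end.

Lemma sub_self A : In A (sub A). Proof. destruct A; left; reflexivity. Qed.

Lemma sub_trans A : forall X Y, In X (sub A) -> In Y (sub X) -> In Y (sub A).
Proof.
  induction A; simpl; intros X Y HX HY;
    destruct HX as [<-|HX]; simpl in HY; auto; try contradiction;
    try (right; apply in_app_or in HX; apply in_or_app; destruct HX; eauto).
  right; eauto.
Qed.
Section Canon.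
Variable Phi : list form.
Hypothesis Hsub : forall X Y, In X Phi -> In Y (sub X) -> In Y Phi.

Ltac subin := apply sub_self || (right; apply in_or_app; (left; apply sub_self) || (right; apply sub_self)) || (right; apply sub_self).

Lemma In_and B C : In (And B C) Phi -> In B Phi /\ In C Phi.
Proof. intro H; split; eapply Hsub; eauto; simpl; subin. Qed.
Lemma In_or B C : In (Or B C) Phi -> In B Phi /\ In C Phi.
Proof. intro H; split; eapply Hsub; eauto; simpl; subin. Qed.
Lemma In_imp B C : In (Imp B C) Phi -> In B Phi /\ In C Phi.
Proof. intro H; split; eapply Hsub; eauto; simpl; subin. Qed.
Lemma In_box B : In (Box B) Phi -> In B Phi.
Proof. intro H; eapply Hsub; eauto; simpl; subin. Qed.

Definition mem (b : list bool) (D : form) := exists i, nth_error Phi i = Some D /\ nth_error b i = Some true.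

Lemma mem_In b D : mem b D -> In D Phi.
Proof. intros [i [H _]]; eapply nth_error_In; eauto. Qed.

Definition good (b : list bool) : Prop :=
  length b = length Phi /\ (forall D, In D Phi -> Der (mem b) D -> mem b D) /\
  (forall D E, mem b (Or D E) -> mem b D \/ mem b E) /\ ~ Der (mem b) Bot.

Definition fb (Delta : form -> Prop) (D : form) : bool :=
  if excluded_middle_informative (Delta D) then true else false.
Definition bits (Delta : form -> Prop) := map (fb Delta) Phi.

Lemma mem_bits Delta D : mem (bits Delta) D <-> In D Phi /\ Delta D.
Proof.
  unfold bits, mem; split.
  - intros [i [H1 H2]]. rewrite nth_error_map, H1 in H2. simpl in H2.
    split; [eapply nth_error_In; eauto|]. unfold fb in H2.
    destruct (excluded_middle_informative (Delta D)); [auto|discriminate].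
  - intros [H1 H2]. destruct (In_nth_error _ _ H1) as [i Hi]. exists i; split; auto.
    rewrite nth_error_map, Hi; simpl. unfold fb.
    destruct (excluded_middle_informative (Delta D)); [auto|contradiction].
Qed.

Fixpoint ext (B : form) (G : form -> Prop) (l : list form) : form -> Prop :=
  match l with
  | [] => G
  | F :: l' => ext B (fun x => G x \/ (x = F /\ ~ Der (fun y => G y \/ y = F) B)) l'
  end.

Lemma ext_incl B l : forall G x, G x -> ext B G l x.
Proof. induction l; simpl; auto. Qed.

Lemma ext_cons B l : forall G, ~ Der G B -> ~ Der (ext B G l) B.
Proof.
  induction l; simpl; intros G H; auto. apply IHl. intro HD.
  destruct (classic (Der (fun y => G y \/ y = a) B)) as [P|P].
  - apply H. eapply Der_mono; [exact HD|]. intros x [Hx|[_ Hx]]; tauto.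
  - apply P. eapply Der_mono; [exact HD|]. intros x [Hx|[-> _]]; auto.
Qed.

Lemma ext_max B l : forall G F, In F l -> ext B G l F \/ Der (fun y => ext B G l y \/ y = F) B.
Proof.
  induction l; simpl; intros G F HF; [contradiction|].
  destruct HF as [<-|HF]; [|apply IHl; auto].
  destruct (classic (Der (fun y => G y \/ y = a) B)) as [P|P].
  - right. eapply Der_mono; [exact P|]. intros x [Hx| ->]; [left; apply ext_incl; auto|right; auto].
  - left. apply ext_incl. right; auto.
Qed.

Lemma lindenbaum G B : ~ Der G B -> exists c, good c /\
   (forall i D, nth_error Phi i = Some D -> G D -> nth_error c i = Some true) /\ ~ mem c B.
Proof.
  intro HG. set (Delta := ext B G Phi).
  assert (HC : ~ Der Delta B) by (apply ext_cons; auto).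
  assert (K1 : forall D, In D Phi -> Der Delta D -> Delta D).
  { intros D HD H. destruct (ext_max B Phi G D HD) as [h|h]; auto. exfalso; apply HC.
    apply Dmp with D; [apply deduction; exact h|exact H]. }
  assert (K2 : forall X, Der (mem (bits Delta)) X -> Der Delta X).
  { intros X H; eapply Der_mono; [exact H|]. intros x Hx; apply mem_bits in Hx; tauto. }
  exists (bits Delta). split; [|split].
  - split; [|split; [|split]].
    + unfold bits; apply length_map.
    + intros D HD H. apply mem_bits. split; auto.
    + intros D E H. apply mem_bits in H. destruct H as [H1 H2].
      destruct (In_or _ _ H1) as [I1 I2].
      destruct (classic (Delta D)) as [h1|h1]; [left; apply mem_bits; auto|].
      destruct (classic (Delta E)) as [h2|h2]; [right; apply mem_bits; auto|].
      exfalso. apply HC.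
      destruct (ext_max B Phi G D I1) as [e1|e1]; [contradiction|].
      destruct (ext_max B Phi G E I2) as [e2|e2]; [contradiction|].
      eapply Dmp; [eapply Dmp; [eapply Dmp; [apply Dthm, (ax_orE D E B)|apply deduction; exact e1]|apply deduction; exact e2]|apply Dhyp; exact H2].
    + intro H. apply HC. eapply Dmp; [apply Dthm, ax_efq|apply K2; exact H].
  - intros i D Hi HD. unfold bits. rewrite nth_error_map, Hi; simpl. unfold fb.
    destruct (excluded_middle_informative (Delta D)) as [|n]; auto.
    exfalso; apply n; apply ext_incl; auto.
  - intro H. apply mem_bits in H. apply HC. apply Dhyp; tauto.
Qed.

Definition lebits (b c : list bool) := forall i, nth_error b i = Some true -> nth_error c i = Some true.

Lemma mem_lebits b c D : lebits b c -> mem b D -> mem c D.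
Proof. intros H [i [H1 H2]]; exists i; auto. Qed.

Fixpoint cnt (b : list bool) : nat := match b with [] => 0 | x :: b' => (if x then 1 else 0) + cnt b' end.

Lemma cnt_le_len b : cnt b <= length b.
Proof. induction b as [|[] b]; simpl; lia. Qed.

Lemma cnt_le : forall b c, length b = length c -> lebits b c -> cnt b <= cnt c.
Proof.
  induction b as [|x b IH]; destruct c as [|y c]; simpl; intros Hl H; try discriminate; try lia.
  assert (H' : lebits b c) by (intros i h; apply (H (S i)); exact h).
  specialize (IH c ltac:(lia) H').
  destruct x, y; try lia. specialize (H 0 eq_refl). discriminate.
Qed.

Lemma cnt_lt : forall b c, length b = length c -> lebits b c -> b <> c -> cnt b < cnt c.
Proof.
  induction b as [|x b IH]; destruct c as [|y c]; simpl; intros Hl H Hn; try discriminate.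
  - congruence.
  - assert (H' : lebits b c) by (intros i h; apply (H (S i)); exact h).
    destruct x, y.
    + assert (b <> c) by congruence. specialize (IH c ltac:(lia) H' H0). lia.
    + specialize (H 0 eq_refl). discriminate.
    + pose proof (cnt_le b c ltac:(lia) H'). lia.
    + assert (b <> c) by congruence. specialize (IH c ltac:(lia) H' H0). lia.
Qed.

Fixpoint chain (b : list bool) (l : list (list bool)) : Prop :=
  match l with
  | [] => True
  | c :: l' => (lebits b c /\ b <> c /\ good c) /\ chain c l'
  end.

Fixpoint lastc (b : list bool) (l : list (list bool)) : list bool :=
  match l with [] => b | c :: l' => lastc c l' end.

Lemma lastc_app l : forall b s, lastc b (l ++ s) = lastc (lastc b l) s.
Proof. induction l; simpl; auto. Qed.

Lemma chain_app l : forall b s, chain b (l ++ s) <-> chain b l /\ chain (lastc b l) s.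
Proof.
  induction l; simpl; intros b s; [tauto|]. rewrite IHl. tauto.
Qed.

Lemma chain_le l : forall b, chain b l -> lebits b (lastc b l).
Proof.
  induction l; simpl; intros b H; [intros i h; exact h|].
  destruct H as [[H1 _] H2]. intros i h. apply IHl; auto.
Qed.

Lemma chain_good l : forall b, good b -> chain b l -> good (lastc b l).
Proof. induction l; simpl; intros b Hb H; auto. apply IHl; tauto. Qed.

Lemma chain_len l : forall b, good b -> chain b l -> length l + cnt b <= length Phi.
Proof.
  induction l; simpl; intros b Hb H.
  - pose proof (cnt_le_len b). destruct Hb; lia.
  - destruct H as [[H1 [H2 H3]] H4]. specialize (IHl a H3 H4).
    pose proof (cnt_lt b a ltac:(destruct Hb, H3; lia) H1 H2). lia.
Qed.

Lemma chain_elems l : forall b, chain b l -> forall c, In c l -> length c = length Phi.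
Proof.
  induction l; simpl; intros b H c Hc; [contradiction|].
  destruct Hc as [<-|Hc]; [destruct H as [[_ [_ [h _]]] _]; auto|eapply IHl; [apply H|auto]].
Qed.
Variable b0 : list bool.
Hypothesis Hb0 : good b0.

Definition W := {l : list (list bool) | chain b0 l}.
Definition Lw (x : W) := lastc b0 (proj1_sig x).
Definition ltw (x y : W) := exists s, s <> [] /\ proj1_sig y = proj1_sig x ++ s.
Definition Rc b c := (forall C, mem b (Box C) -> mem c C) /\ exists C, mem c (Box C) /\ ~ mem b (Box C).
Definition Rw (x y : W) := ltw x y /\ Rc (Lw x) (Lw y).
Definition Vw p (x : W) := mem (Lw x) (Var p).

Lemma wext (x y : W) : proj1_sig x = proj1_sig y -> x = y.
Proof. destruct x, y; simpl; intros ->. f_equal; apply proof_irrelevance. Qed.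

Lemma le_char x y : (x = y \/ ltw x y) <-> exists s, proj1_sig y = proj1_sig x ++ s.
Proof.
  split.
  - intros [->|[s [_ H]]]; [exists []; rewrite app_nil_r; auto|eauto].
  - intros [s H]. destruct s as [|a s].
    + left; apply wext. rewrite app_nil_r in H; auto.
    + right; exists (a :: s); split; [discriminate|auto].
Qed.

Lemma Lw_good x : good (Lw x).
Proof. apply chain_good; auto. apply proj2_sig. Qed.

Lemma le_lebits x y : (x = y \/ ltw x y) -> lebits (Lw x) (Lw y).
Proof.
  intro H; apply le_char in H. destruct H as [s H]. unfold Lw. rewrite H, lastc_app.
  apply chain_le. pose proof (proj2_sig y) as Hy. simpl in Hy. rewrite H in Hy.
  apply chain_app in Hy; tauto.
Qed.

Lemma ltw_irr x : ~ ltw x x.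
Proof. intros [s [H1 H2]]. apply (f_equal (@length _)) in H2. rewrite length_app in H2.
  destruct s; [congruence|simpl in H2; lia]. Qed.

Lemma ltw_trans x y z : ltw x y -> ltw y z -> ltw x z.
Proof.
  intros [s [H1 H2]] [t [H3 H4]]. exists (s ++ t). split.
  - destruct s; [congruence|discriminate].
  - rewrite H4, H2, app_assoc; auto.
Qed.

Lemma le_ltw x y z : (x = y \/ ltw x y) -> ltw y z -> ltw x z.
Proof. intros [->|H] H'; auto. eapply ltw_trans; eauto. Qed.

Lemma le_Rw x y z : (x = y \/ ltw x y) -> Rw y z -> Rw x z.
Proof.
  intros H [H1 [H2 [C [H3 H4]]]]. split; [eapply le_ltw; eauto|split].
  - intros D HD. apply H2. eapply mem_lebits; [apply le_lebits; eauto|auto].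
  - exists C; split; auto. intro h; apply H4. eapply mem_lebits; [apply le_lebits; eauto|auto].
Qed.

Lemma Vw_mono p x y : (x = y \/ ltw x y) -> Vw p x -> Vw p y.
Proof. intros H h; eapply mem_lebits; [apply le_lebits; eauto|auto]. Qed.

Definition CM : model := Model W ltw Rw Vw ltw_irr ltw_trans le_Rw Vw_mono.

Lemma CM_perfect : perfect CM.
Proof.
  split; [|split].
  - simpl. intros x y z [H1 [H2 [C [H3 H4]]]] H. split; [|split].
    + destruct H as [<-|H]; auto. eapply ltw_trans; eauto.
    + intros D HD; eapply mem_lebits; [apply le_lebits; eauto|auto].
    + exists C; split; auto. eapply mem_lebits; [apply le_lebits; eauto|auto].
  - apply (well_founded_lt_compat _ (fun x : W => S (length Phi) - length (proj1_sig x))).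
    intros y x [[s [H1 H2]] _].
    pose proof (chain_len _ _ Hb0 (proj2_sig y)).
    rewrite H2, length_app in *. destruct s; [congruence|]. cbn [length] in *. lia.
  - simpl; intros x y [H _]; auto.
Qed.

Fixpoint allbits (k : nat) : list (list bool) :=
  match k with 0 => [[]] | S k => flat_map (fun l => [true :: l; false :: l]) (allbits k) end.

Lemma allbits_in k : forall b, length b = k -> In b (allbits k).
Proof.
  induction k; destruct b as [|x b]; simpl; intros H; try discriminate; auto.
  apply in_flat_map. exists b; split; [apply IHk; lia|destruct x; simpl; auto].
Qed.

Fixpoint lists {A} (m : nat) (E : list A) : list (list A) :=
  match m with 0 => [[]] | S m => [] :: flat_map (fun e => map (cons e) (lists m E)) E end.

Lemma lists_in {A} m (E : list A) : forall l, length l <= m -> (forall x, In x l -> In x E) -> In l (lists m E).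
Proof.
  induction m; destruct l as [|x l]; simpl; intros H1 H2; auto; try lia.
  right. apply in_flat_map. exists x; split; auto. apply in_map. apply IHm; auto; lia.
Qed.

Lemma CM_finite : finite_model CM.
Proof.
  exists (flat_map (fun l => match excluded_middle_informative (chain b0 l) with
                            | left p => [exist _ l p] | right _ => [] end)
     (lists (length Phi) (allbits (length Phi)))).
  intros [l p]. apply in_flat_map. exists l; split.
  - apply lists_in.
    + pose proof (chain_len _ _ Hb0 p). lia.
    + intros c Hc. apply allbits_in. eapply chain_elems; eauto.
  - destruct (excluded_middle_informative (chain b0 l)); [|contradiction].
    left; apply wext; reflexivity.
Qed.

Lemma CM_tree : tree_frame CM.
Proof.
  split.
  - exists (exist _ [] I : W). intro x. apply le_char. exists (proj1_sig x); auto.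
  - simpl. intros x y z H1 H2. apply le_char in H1, H2. destruct H1 as [s1 H1], H2 as [s2 H2].
    rewrite H1 in H2. destruct (app_eq_app _ _ _ _ H2) as [l [[E _]|[E _]]].
    + right; apply le_char; eauto.
    + left; apply le_char; eauto.
Qed.

Definition extw (x : W) (c : list bool) (H1 : lebits (Lw x) c) (H2 : Lw x <> c) (H3 : good c) : W.
Proof.
  exists (proj1_sig x ++ [c]). apply chain_app. split; [apply proj2_sig|]. simpl. tauto.
Defined.

Lemma extw_L x c H1 H2 H3 : Lw (extw x c H1 H2 H3) = c.
Proof. unfold Lw, extw; simpl. rewrite lastc_app. reflexivity. Qed.

Lemma extw_lt x c H1 H2 H3 : ltw x (extw x c H1 H2 H3).
Proof. exists [c]; split; [discriminate|reflexivity]. Qed.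

Lemma closed x D : In D Phi -> Der (mem (Lw x)) D -> mem (Lw x) D.
Proof. apply (Lw_good x). Qed.

Lemma leb_of x c : (forall i D, nth_error Phi i = Some D -> mem (Lw x) D -> nth_error c i = Some true) -> lebits (Lw x) c.
Proof.
  intros H i h. destruct (nth_error Phi i) as [D|] eqn:E.
  - eapply H; eauto. exists i; auto.
  - exfalso. apply nth_error_None in E. assert (i < length (Lw x)) by (apply nth_error_Some; congruence).
    destruct (Lw_good x). lia.
Qed.

Lemma truth A : In A Phi -> forall x : W, forces CM x A <-> mem (Lw x) A.
Proof.
  induction A; intros HA x; simpl.
  - unfold Vw; tauto.
  - split; [tauto|]. intro H. apply (Lw_good x). apply Dhyp; auto.
  - destruct (In_and _ _ HA) as [I1 I2]. rewrite IHA1, IHA2 by auto. split.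
    + intros [h1 h2]. apply closed; auto.
      eapply Dmp; [eapply Dmp; [apply Dthm, ax_andI|apply Dhyp; exact h1]|apply Dhyp; exact h2].
    + intro h. split; apply closed; auto.
      * apply Dmp with (And A1 A2); [apply Dthm, ax_andE1|apply Dhyp; exact h].
      * apply Dmp with (And A1 A2); [apply Dthm, ax_andE2|apply Dhyp; exact h].
  - destruct (In_or _ _ HA) as [I1 I2]. rewrite IHA1, IHA2 by auto. split.
    + intros [h|h]; apply closed; auto.
      * apply Dmp with A1; [apply Dthm, ax_orI1|apply Dhyp; exact h].
      * apply Dmp with A2; [apply Dthm, ax_orI2|apply Dhyp; exact h].
    + intro h. apply (Lw_good x); auto.
  - destruct (In_imp _ _ HA) as [I1 I2]. split.
    + intro H. destruct (classic (mem (Lw x) (Imp A1 A2))) as [|NH]; auto. exfalso.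
      set (G := fun y => mem (Lw x) y \/ y = A1).
      assert (ND : ~ Der G A2).
      { intro D. apply NH. apply closed; auto. apply deduction; exact D. }
      destruct (lindenbaum G A2 ND) as [c [Gc [Hc Nc]]].
      assert (L : lebits (Lw x) c) by (apply leb_of; intros i D Hi Hm; apply (Hc i D Hi); left; auto).
      assert (MA : mem c A1).
      { destruct (In_nth_error _ _ I1) as [i Hi]. exists i; split; auto. apply (Hc i _ Hi). right; auto. }
      destruct (classic (Lw x = c)) as [E|E].
      * subst c. apply Nc. apply IHA2; auto. apply H; [left; auto|]. apply IHA1; auto.
      * apply Nc. rewrite <- (extw_L x c L E Gc). apply IHA2; auto.
        apply H; [right; apply extw_lt|]. apply IHA1; auto. rewrite extw_L; auto.
    + intros h y Hy Ha. apply IHA2; auto. apply IHA1 in Ha; auto. apply closed; auto.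
      eapply Dmp; apply Dhyp; [|exact Ha]. eapply mem_lebits; [apply le_lebits; eauto|auto].
  - pose proof (In_box _ HA) as I1. split.
    + intro H. destruct (classic (mem (Lw x) (Box A))) as [|NH]; auto. exfalso.
      set (G := fun y => (mem (Lw x) y \/ mem (Lw x) (Box y)) \/ y = Box A).
      assert (ND : ~ Der G A).
      { intro D. apply NH. apply closed; auto. apply deduction, Der_nec in D.
        eapply Dmp; [apply Dthm, ax_Lob|]. eapply Der_cut; [exact D|].
        intros z [y [[hy|hy] ->]]; [|apply Dhyp; auto].
        eapply Dmp; [apply Dthm, ax_LC|apply Dhyp; auto]. }
      destruct (lindenbaum G A ND) as [c [Gc [Hc Nc]]].
      assert (L : lebits (Lw x) c) by (apply leb_of; intros i D Hi Hm; apply (Hc i D Hi); left; left; auto).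
      assert (MB : mem c (Box A)).
      { destruct (In_nth_error _ _ HA) as [i Hi]. exists i; split; auto. apply (Hc i _ Hi). right; auto. }
      assert (E : Lw x <> c) by (intro e; rewrite <- e in MB; contradiction).
      apply Nc. rewrite <- (extw_L x c L E Gc). apply IHA; auto. apply H.
      split; [apply extw_lt|]. rewrite extw_L. split.
      * intros C HC. pose proof (In_box _ (mem_In _ _ HC)) as IC.
        destruct (In_nth_error _ _ IC) as [i Hi]. exists i; split; auto. apply (Hc i _ Hi). left; right; auto.
      * exists A; split; auto.
    + intros h y [_ [Hy _]]. apply IHA; auto.
Qed.

End Canon.

Theorem theorem4p25 : forall A : form,
  LC_prf A <->
  (forall M : model, finite_model M -> perfect M -> tree_frame M ->
     forall x : world M, forces M x A).
Proof.
  intro A. split.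
  - intros H M _ HP _ x. apply sound; auto.
  - intro Hv. destruct (classic (LC_prf A)) as [|NA]; auto. exfalso.
    assert (Hsub : forall X Y, In X (sub A) -> In Y (sub X) -> In Y (sub A)) by (intros; eapply sub_trans; eauto).
    assert (ND : ~ Der (fun _ => False) A) by (intro D; apply NA, Der_empty, D).
    destruct (lindenbaum (sub A) Hsub _ _ ND) as [b0 [Gb [_ Nb]]].
    apply Nb. pose proof (Hv (CM (sub A) b0) (CM_finite _ _ Gb) (CM_perfect _ _ Gb) (CM_tree _ _) (exist _ [] I)) as F.
    apply (truth (sub A) Hsub b0 Gb A (sub_self A)) in F. exact F.
Qed.
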